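(* Let $m\in\{1,2\}$, $\gamma\in(\gamma_\star,\gamma_1]$ and $z\in(z_1,z_M]$. Then the continuation to the right, $C:[V_8,0)\to(0,\infty)$, of the local real-analytic solution through $P_8$ satisfies $C(V)<\sqrt{-V}$ for all $V\in(V_8,0)$; in particular $C(V)\to0$ as $V\to0^-$.
   Context: Fix $m\in\{1,2\}$. For $z>0$ put $\lambda=1+m\gamma z$, $a_1=1+\frac{m(\gamma-1)}{2}$, $a_2=\frac{m(\gamma-1)+mz\gamma(\gamma-3)}{2}$, $a_3=\frac{mz\gamma(\gamma-1)}{2}$, $G(V,C;\gamma,z)=C^2[(m+1)V+2mz]-V(1+V)(\lambda+V)$, $F(V,C;\gamma,z)=C\{C^2[1+\frac{mz}{1+V}]-a_1(1+V)^2+a_2(1+V)-a_3\}$; ODE $\frac{dC}{dV}=\frac FG$. $z_M=(\sqrt\gamma+\sqrt2)^{-2}$; $w(z)=\sqrt{1-2(\gamma+2)z+(\gamma-2)^2z^2}$, $V_8=\frac{-1+(\gamma-2)z+w}{2}$, $C_8=1+V_8$, $P_8=(V_8,C_8)$. The local solution is the real-analytic solution near $V_8$ with $C(V_8)=C_8$ and $C'(V_8)$ equal to the unique negative root of $-G_Cc^2+(F_C-G_V)c+F_V=0$ (partials at $P_8$); it extends as a positive decreasing solution on $[V_8,0)$. $z_1=\frac{\sqrt5-1}{2(1+\sqrt5+\gamma)}$, $\gamma_1=1+\sqrt2$, and $\gamma_\star\approx1.7$ is the value with $\frac{\sqrt{2\gamma(\gamma-1)}}{\gamma+1}=\sqrt{\frac{2\gamma}{(2+\sqrt{2\gamma})(\gamma+1)}}$.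 *)

(* Defs.v *)
From Stdlib Require Import Reals.
From Coquelicot Require Import Coquelicot.
Open Scope R_scope.

Definition lam (m g z : R) : R := 1 + m * g * z.
Definition a1 (m g : R) : R := 1 + m * (g - 1) / 2.
Definition a2 (m g z : R) : R := (m * (g - 1) + m * z * g * (g - 3)) / 2.
Definition a3 (m g z : R) : R := m * z * g * (g - 1) / 2.

Definition Gf (m g z V C : R) : R :=
  C ^ 2 * ((m + 1) * V + 2 * m * z) - V * (1 + V) * (lam m g z + V).

Definition Ff (m g z V C : R) : R :=
  C * (C ^ 2 * (1 + m * z / (1 + V)) - a1 m g * (1 + V) ^ 2
       + a2 m g z * (1 + V) - a3 m g z).

Definition zM (g : R) : R := / (sqrt g + sqrt 2) ^ 2.
Definition wf (g z : R) : R := sqrt (1 - 2 * (g + 2) * z + (g - 2) ^ 2 * z ^ 2).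
Definition V8 (g z : R) : R := (-1 + (g - 2) * z + wf g z) / 2.
Definition C8 (g z : R) : R := 1 + V8 g z.

Definition z1 (g : R) : R := (sqrt 5 - 1) / (2 * (1 + sqrt 5 + g)).
Definition gamma1 : R := 1 + sqrt 2.

(* gamma_star ~ 1.702: the root in (1,2) of the defining equation *)
Definition is_gamma_star (gs : R) : Prop :=
  1 < gs < 2 /\
  sqrt (2 * gs * (gs - 1)) / (gs + 1) =
  sqrt (2 * gs / ((2 + sqrt (2 * gs)) * (gs + 1))).

Definition G_V m g z := Derive (fun V => Gf m g z V (C8 g z)) (V8 g z).
Definition G_C m g z := Derive (fun C => Gf m g z (V8 g z) C) (C8 g z).
Definition F_V m g z := Derive (fun V => Ff m g z V (C8 g z)) (V8 g z).
Definition F_C m g z := Derive (fun C => Ff m g z (V8 g z) C) (C8 g z).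

(* the characteristic quadratic for the slope at P8 *)
Definition slope_quad (m g z c : R) : R :=
  - G_C m g z * c ^ 2 + (F_C m g z - G_V m g z) * c + F_V m g z.

Definition real_analytic_at (f : R -> R) (x0 : R) : Prop :=
  exists (a : nat -> R) (r : R), 0 < r /\
    forall x, Rabs (x - x0) < r -> is_pseries a (x - x0) (f x).

(* Main.v *)
Require Import Defs.
From Stdlib Require Import Reals Lra Psatz Ranalysis5.
From Coquelicot Require Import Coquelicot.
Open Scope R_scope.
Lemma der_cont f x l : is_derive f x l -> continuity_pt f x.
Proof. intro H. apply continuity_pt_filterlim. apply (ex_derive_continuous f x). exists l; exact H. Qed.

Lemma cont_neg f x : continuity_pt f x -> f x < 0 ->
  exists d, 0 < d /\ forall y, Rabs (y - x) < d -> f y < 0.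
Proof.
  intros Hc Hx. destruct (Hc (- f x)) as [d [Hd H]]; [lra|].
  exists d; split; auto. intros y Hy.
  destruct (Req_dec y x) as [->|Hne]; auto.
  assert (Hd' := H y (conj (conj I (not_eq_sym Hne)) Hy)).
  unfold R_dist in Hd'. apply Rabs_def2 in Hd'. lra.
Qed.

Lemma cont_pos f x : continuity_pt f x -> 0 < f x ->
  exists d, 0 < d /\ forall y, Rabs (y - x) < d -> 0 < f y.
Proof.
  intros Hc Hx. destruct (cont_neg (fun y => - f y) x) as [d [Hd H]].
  - apply continuity_pt_opp; auto.
  - lra.
  - exists d; split; auto. intros y Hy. specialize (H y Hy). simpl in H. lra.
Qed.

Lemma first_touch (f : R -> R) (a b : R) :
  a < b -> (forall x, a <= x <= b -> continuity_pt f x) -> f a < 0 -> 0 <= f b ->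
  exists T, a < T <= b /\ f T = 0 /\ (forall x, a <= x < T -> f x < 0).
Proof.
  intros Hab Hc Ha Hb.
  set (E := fun x => a <= x <= b /\ forall y, a <= y <= x -> f y < 0).
  assert (HE : bound E) by (exists b; intros x [Hx _]; lra).
  assert (HEa : exists x, E x) by (exists a; split; [lra| intros y Hy; replace y with a by lra; auto]).
  destruct (completeness E HE HEa) as [T [HT1 HT2]].
  assert (HaT : a <= T) by (apply HT1; destruct HEa; unfold E; split; [lra| intros y Hy; replace y with a by lra; auto]).
  assert (HTb : T <= b) by (apply HT2; intros x [Hx _]; lra).
  assert (Hbelow : forall x, a <= x < T -> f x < 0).
  { intros x Hx. destruct (Classical_Prop.classic (exists e, E e /\ x <= e)) as [[e [[He1 He2] Hxe]]|Hn].
    - apply He2; lra.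
    - exfalso. assert (T <= x); [|lra]. apply HT2. intros e He.
      destruct (Rle_lt_dec e x); auto. exfalso; apply Hn; exists e; split; auto; lra. }
  assert (HfT : f T = 0).
  { destruct (Rtotal_order (f T) 0) as [Hlt|[Heq|Hgt]]; auto.
    - exfalso. destruct (Rle_lt_dec b T) as [HbT|HTb'].
      + assert (T = b) by lra. subst T. lra.
      + destruct (cont_neg f T (Hc T (conj HaT HTb)) Hlt) as [d [Hd H]].
        set (e := Rmin (T + d/2) b).
        assert (Ee : E e).
        { split. unfold e; split; [apply Rmin_glb; lra| apply Rmin_r].
          intros y Hy. destruct (Rlt_le_dec y T). apply Hbelow; lra.
          apply H. assert (e <= T + d/2) by apply Rmin_l. apply Rabs_def1; lra. }
        assert (e <= T) by (apply HT1; auto).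
        assert (T < e) by (unfold e; apply Rmin_glb_lt; lra). lra.
    - exfalso. destruct (Req_dec T a) as [->|HTa]; [lra|].
      destruct (cont_pos f T (Hc T (conj HaT HTb)) Hgt) as [d [Hd H]].
      set (x := Rmax a (T - d/2)).
      assert (x < T) by (unfold x; apply Rmax_lub_lt; lra).
      assert (a <= x) by apply Rmax_l.
      assert (T - d/2 <= x) by apply Rmax_r.
      assert (0 < f x) by (apply H; apply Rabs_def1; lra).
      assert (f x < 0) by (apply Hbelow; lra). lra. }
  exists T. split; [split; auto|split; auto].
  destruct (Req_dec T a) as [->|]; [lra|lra].
Qed.

Lemma touch_deriv f T a l : a < T -> derivable_pt_lim f T l -> f T = 0 ->
  (forall x, a <= x < T -> f x < 0) -> 0 <= l.
Proof.
  intros HaT Hd HfT Hb. destruct (Rle_lt_dec 0 l) as [|Hl]; auto. exfalso.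
  destruct (Hd (- l / 2)) as [del Hdel]; [lra|].
  set (h := - Rmin (del/2) ((T-a)/2)).
  assert (Hm1 : Rmin (del/2) ((T-a)/2) <= del/2) by apply Rmin_l.
  assert (Hm2 : Rmin (del/2) ((T-a)/2) <= (T-a)/2) by apply Rmin_r.
  assert (Hm3 : 0 < Rmin (del/2) ((T-a)/2)) by (apply Rmin_glb_lt; destruct del; simpl; lra).
  assert (Hh : h <> 0) by (unfold h; lra).
  assert (Hah : Rabs h < del) by (unfold h; rewrite Rabs_Ropp, Rabs_pos_eq; destruct del; simpl in *; lra).
  specialize (Hdel h Hh Hah). rewrite HfT, Rminus_0_r in Hdel.
  apply Rabs_def2 in Hdel. destruct Hdel as [H1 H2].
  assert (f (T + h) < 0) by (apply Hb; unfold h; lra).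
  assert (f (T+h) / h > 0).
  { unfold Rdiv. apply Rmult_neg_neg; auto. apply Rinv_lt_0_compat. unfold h; lra. }
  lra.
Qed.

Lemma start_below f x0 l : derivable_pt_lim f x0 l -> l < 0 ->
  exists d, 0 < d /\ forall x, x0 < x < x0 + d -> f x < f x0.
Proof.
  intros Hd Hl. destruct (Hd (- l / 2)) as [del Hdel]; [lra|].
  exists del. split; [destruct del; auto|]. intros x Hx.
  assert (Hh : x - x0 <> 0) by lra.
  assert (Hah : Rabs (x - x0) < del) by (rewrite Rabs_pos_eq; lra).
  specialize (Hdel (x - x0) Hh Hah). replace (x0 + (x - x0)) with x in Hdel by ring.
  apply Rabs_def2 in Hdel. destruct Hdel as [H1 H2].
  assert (Hq : (f x - f x0) / (x - x0) < 0) by lra.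
  destruct (Rle_lt_dec (f x0) (f x)); auto. exfalso.
  assert (0 <= (f x - f x0) / (x - x0)).
  { unfold Rdiv. apply Rmult_le_pos; [lra|]. apply Rlt_le, Rinv_0_lt_compat; lra. }
  lra.
Qed.

Lemma sqrt_sq x : 0 <= x -> sqrt x ^ 2 = x.
Proof. intro H. simpl. rewrite Rmult_1_r. apply sqrt_sqrt; auto. Qed.

Lemma params m g z gs :
  (m = 1 \/ m = 2) -> is_gamma_star gs -> gs < g <= gamma1 -> z1 g < z <= zM g ->
  1 < g <= 2.4143 /\ 0 < z <= 0.175 /\
  V8 g z ^ 2 + V8 g z * (1 - (g-2)*z) + 2*z = 0 /\
  -0.6 <= V8 g z <= -0.38 /\ V8 g z ^ 2 + 3 * V8 g z + 1 < 0.
Proof.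
  intros Hm [[Hgs1 Hgs2] _] [Hg1 Hg2] [Hz1 Hz2].
  assert (Hs2 := sqrt_sq 2 ltac:(lra)). assert (Hs2p := sqrt_pos 2).
  assert (Hs5 := sqrt_sq 5 ltac:(lra)). assert (Hs5p := sqrt_pos 5).
  assert (Hg : 1 < g) by lra.
  assert (Hsg := sqrt_sq g ltac:(lra)). assert (Hsgp := sqrt_pos g).
  set (s2 := sqrt 2) in *. set (s5 := sqrt 5) in *. set (sg := sqrt g) in *.
  assert (B2 : 1.4142 < s2 < 1.4143) by nra.
  assert (B5 : 2.236 < s5 < 2.2361) by nra.
  assert (Bg : 1 < sg) by nra.
  unfold gamma1 in Hg2. fold s2 in Hg2.
  assert (Hgb : g <= 2.4143) by lra.
  unfold z1 in Hz1. fold s5 in Hz1. unfold zM in Hz2. fold sg s2 in Hz2.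
  set (X := (sg + s2)^2) in *.
  assert (HX : 5.8 < X) by (unfold X; nra).
  assert (HzX : z * X <= 1).
  { replace 1 with (/X * X) by (field; lra). apply Rmult_le_compat_r; lra. }
  assert (Hz1p : 0 < (s5 - 1) / (2 * (1 + s5 + g))).
  { apply Rdiv_lt_0_compat; lra. }
  assert (Hz0 : 0 < z) by lra.
  assert (Hzb : z <= 0.175) by nra.
  set (Y := (sg - s2)^2).
  assert (HYX : Y <= X) by (unfold X, Y; nra).
  assert (Hdisc : 1 - 2*(g+2)*z + (g-2)^2*z^2 = (X*z - 1)*(Y*z - 1)).
  { unfold X, Y. replace (g - 2) with (sg^2 - s2^2) by (rewrite Hsg, Hs2; ring).
    replace (g + 2) with (sg^2 + s2^2) by (rewrite Hsg, Hs2; ring). ring. }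
  assert (Hdpos : 0 <= 1 - 2*(g+2)*z + (g-2)^2*z^2).
  { rewrite Hdisc. assert (Y*z <= 1) by nra. nra. }
  assert (Hw := sqrt_sq _ Hdpos). assert (Hwp := sqrt_pos (1 - 2*(g+2)*z + (g-2)^2*z^2)).
  unfold V8, wf. set (w := sqrt (1 - 2*(g+2)*z + (g-2)^2*z^2)) in *.
  set (v := (-1 + (g-2)*z + w)/2).
  assert (Hq : v ^ 2 + v * (1 - (g-2)*z) + 2*z = 0) by (unfold v; nra).
  set (k := (g-2)*z).
  assert (Hk1 : -0.175 <= k) by (unfold k; nra).
  assert (Hk2 : k <= 0.073) by (unfold k; nra).
  assert (Hvl : (k-1)/2 <= v) by (unfold v, k; lra).
  set (Vs := (s5 - 3)/2).
  assert (HqVs : Vs^2 + Vs*(1-k) + 2*z = (2-(g-2)*Vs)*(z - (s5 - 1) / (2 * (1 + s5 + g)))).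
  { assert (E1 : (2-(g-2)*Vs)*((s5-1)/(2*(1+s5+g))) = s5 - 2).
    { replace ((2-(g-2)*Vs)*((s5-1)/(2*(1+s5+g)))) with
        ((4*(s5-2)*(1+s5+g) - (g+2)*(s5^2-5))/(4*(1+s5+g))) by (unfold Vs; field; lra).
      rewrite Hs5. field. lra. }
    assert (E2 : Vs^2 + Vs = 2 - s5) by (unfold Vs; nra).
    replace ((2-(g-2)*Vs)*(z - (s5 - 1) / (2 * (1 + s5 + g)))) with
      ((2-(g-2)*Vs)*z - (2-(g-2)*Vs)*((s5 - 1) / (2 * (1 + s5 + g)))) by ring.
    rewrite E1.
    replace (Vs^2 + Vs*(1-k) + 2*z) with ((Vs^2+Vs) - k*Vs + 2*z) by ring.
    rewrite E2. unfold k. ring. }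
  assert (Hfac : Vs^2 + Vs*(1-k) + 2*z = (Vs - v)*(Vs - (k - 1 - v))).
  { fold k in Hq. nra. }
  assert (HD : 0 < 2-(g-2)*Vs) by (unfold Vs; nra).
  assert (Hpos : 0 < (Vs - v)*(Vs - (k - 1 - v))).
  { rewrite <- Hfac, HqVs. apply Rmult_lt_0_compat; lra. }
  assert (Hsec : 0 < Vs - (k - 1 - v)) by (unfold Vs; lra).
  assert (Hvs : 0 < Vs - v).
  { apply (Rmult_lt_reg_r (Vs - (k-1-v))); [lra| rewrite Rmult_0_l; lra]. }
  assert (HvVs : Vs < -0.38) by (unfold Vs; lra).
  split; [lra|]. split; [lra|]. split; [fold k; exact Hq|].
  split; [split; lra|].
  assert (Ef : (v - Vs)*(v - (-3-s5)/2) = v^2+3*v + (9 - s5^2)/4) by (unfold Vs; field).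
  rewrite Hs5 in Ef.
  assert (Hp2 : 0 < v - (-3 - s5)/2) by lra.
  assert (Hp3 : 0 < (Vs - v)*(v - (-3 - s5)/2)) by (apply Rmult_lt_0_compat; lra).
  assert (Ef2 : (v - Vs)*(v - (-3-s5)/2) = - ((Vs - v)*(v - (-3 - s5)/2))) by ring.
  lra.
Qed.
Definition Qf (m g z u : R) : R := -(1+m*(g-1))*u^3 + (m*g-1+m*z*g*(g-2))*u^2 + (1-m-m*z*g*(g-1))*u + 2*m*z.
Definition T1 v g := -2 + v*(-4+10*g-2*g^2) + v^2*(-2+17*g-5*g^2) + v^3*(10*g-4*g^2) + v^4*(2*g-g^2).
Definition T2 v g := -6+18*g-4*g^2 + v*(-12+35*g-10*g^2) + v^2*(-8+23*g-8*g^2) + v^3*(-2+5*g-2*g^2).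
Lemma Qu0_1 v g z : Qf 1 g z (-v*(2+v)) * (2-(g-2)*v) =
  (v^2+3*v+1)*(v*T1 v g) + (1*g*(g-2)*(-v*(2+v))^2 - 1*g*(g-1)*(-v*(2+v)) + 2*1)*(v^2+v*(1-(g-2)*z)+2*z).
Proof. unfold Qf, T1. ring. Qed.
Lemma Qu0_2 v g z : Qf 2 g z (-v*(2+v)) * (2-(g-2)*v) =
  (v^2+3*v+1)*(v^2*T2 v g) + (2*g*(g-2)*(-v*(2+v))^2 - 2*g*(g-1)*(-v*(2+v)) + 2*2)*(v^2+v*(1-(g-2)*z)+2*z).
Proof. unfold Qf, T2. ring. Qed.
Lemma Qdiff m g z x y : Qf m g z x - Qf m g z y =
  (x-y)*(-(1+m*(g-1))*(x^2+x*y+y^2) + (m*g-1+m*z*g*(g-2))*(x+y) + (1-m-m*z*g*(g-1))).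
Proof. unfold Qf. ring. Qed.
Lemma T1neg v g : -0.6 <= v <= -0.38 -> 1 <= g <= 2.4143 ->
  -2 + v*(-4+10*g-2*g^2) + v^2*(-2+17*g-5*g^2) + v^3*(10*g-4*g^2) + v^4*(2*g-g^2) < 0.
Proof. intros [H1 H2] [H3 H4].
assert (Hc : 0 <= -v*(2+5*v+4*v^2+v^3)).
{ replace (-v*(2+5*v+4*v^2+v^3)) with ((-v)*((v+1)^2*(v+2))) by ring.
  apply Rmult_le_pos; [lra| apply Rmult_le_pos; nra]. }
assert (Hp : 0 <= (g-1)*(2.4143-g)) by nra.
assert (Hv : 0 <= (v+0.6)*(-0.38-v)) by nra.
assert (Ha : -2 + 4*v + 10*v^2 + 6*v^3 + v^4 < 0) by nra.
set (b := 2.4143) in *.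
set (Tb := -2 -4*v -2*v^2 + b*(10*v+17*v^2+10*v^3+2*v^4) - b^2*(2*v+5*v^2+4*v^3+v^4)).
assert (Hb : Tb < 0).
{ unfold Tb, b. nra. }
set (Ta := -2 + 4*v + 10*v^2 + 6*v^3 + v^4) in *.
set (c := -v*(2+5*v+4*v^2+v^3)) in *.
assert (E : -2 + v*(-4+10*g-2*g^2) + v^2*(-2+17*g-5*g^2) + v^3*(10*g-4*g^2) + v^4*(2*g-g^2)
  = (Ta*(b-g) + Tb*(g-1))/(b-1) - c*((g-1)*(b-g))).
{ unfold Ta, Tb, c, b. field. lra. }
rewrite E.
assert (Hn : Ta*(b-g) + Tb*(g-1) < 0).
{ destruct (Rle_lt_dec g 1.5); unfold b in *; nra. }
assert (Hd : 0 < / (b-1)) by (apply Rinv_0_lt_compat; unfold b; lra).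
unfold Rdiv. nra.
Qed.
Lemma T2pos v g : -0.6 <= v <= -0.38 -> 1 <= g <= 2.4143 ->
  0 < -6+18*g-4*g^2 + v*(-12+35*g-10*g^2) + v^2*(-8+23*g-8*g^2) + v^3*(-2+5*g-2*g^2).
Proof. intros [H1 H2] [H3 H4].
assert (Hc : 0 <= 2*((v+1)^2*(v+2))) by (apply Rmult_le_pos; [lra| apply Rmult_le_pos; nra]).
assert (Hp : 0 <= (g-1)*(2.4143-g)) by nra.
assert (Hv : 0 <= (v+0.6)*(-0.38-v)) by nra.
set (b := 2.4143) in *.
set (Ta := 8 + 13*v + 7*v^2 + v^3).
assert (Ha : 0 < Ta) by (unfold Ta; nra).
set (Tb := -6-12*v-8*v^2-2*v^3 + b*(18+35*v+23*v^2+5*v^3) - b^2*(4+10*v+8*v^2+2*v^3)).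
assert (Hb : 0 < Tb) by (unfold Tb, b; nra).
set (c := 2*((v+1)^2*(v+2))) in *.
assert (E : -6+18*g-4*g^2 + v*(-12+35*g-10*g^2) + v^2*(-8+23*g-8*g^2) + v^3*(-2+5*g-2*g^2)
  = (Ta*(b-g) + Tb*(g-1))/(b-1) + c*((g-1)*(b-g))).
{ unfold Ta, Tb, c, b. field. lra. }
rewrite E.
assert (Hn : 0 < Ta*(b-g) + Tb*(g-1)).
{ destruct (Rle_lt_dec g 1.5); unfold b in *; nra. }
assert (Hd : 0 < / (b-1)) by (apply Rinv_0_lt_compat; unfold b; lra).
unfold Rdiv. nra.
Qed.
Lemma Br_neg m g z x y : (m = 1 \/ m = 2) -> 1 <= g <= 2.4143 -> 0 <= z <= 0.175 ->
  0.6 <= x <= 1 -> 0.6 <= y <= 1 ->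
  -(1+m*(g-1))*(x^2+x*y+y^2) + (m*g-1+m*z*g*(g-2))*(x+y) + (1-m-m*z*g*(g-1)) < 0.
Proof.
  intros Hm [Hg1 Hg2] [Hz1 Hz2] [Hx1 Hx2] [Hy1 Hy2].
  assert (H3a : g*(g-2) <= 1.001) by nra.
  assert (H3 : z*(g*(g-2)) <= 0.1752) by nra.
  assert (H4 : 0 <= z*g*(g-1)) by (apply Rmult_le_pos; [apply Rmult_le_pos|]; lra).
  set (A := -(1+m*(g-1))). set (B := m*g-1+m*z*g*(g-2)). set (Cc := 1-m-m*z*g*(g-1)).
  set (s := x + y).
  assert (HA : A < 0) by (unfold A; destruct Hm as [-> | ->]; lra).
  assert (HX : 0.75*s^2 <= x^2+x*y+y^2) by (unfold s; pose proof (pow2_ge_0 (x-y)); nra).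
  assert (Hs : 1.2 <= s) by (unfold s; lra).
  assert (HB : 1.8*A + B < 0).
  { unfold A, B. replace (m*z*g*(g-2)) with (m*(z*(g*(g-2)))) by ring.
    destruct Hm as [-> | ->]; lra. }
  assert (H12 : 1.08*A + 1.2*B + Cc < 0).
  { unfold A, B, Cc. replace (m*z*g*(g-2)) with (m*(z*(g*(g-2)))) by ring.
    replace (m*z*g*(g-1)) with (m*(z*g*(g-1))) by ring.
    destruct Hm as [-> | ->]; nra. }
  assert (E1 : A*(x^2+x*y+y^2) <= A*(0.75*s^2)) by nra.
  assert (E2 : A*(3/4*s^2) + B*s + Cc - (27/25*A + 6/5*B + Cc) = (s-6/5)*(A*(3/4)*(s+6/5) + B)) by field.
  assert (E3 : A*(3/4)*(s+6/5) + B <= 1.8*A + B) by nra.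
  assert (E4 : (s-6/5)*(A*(3/4)*(s+6/5) + B) <= 0) by (assert (0 <= s - 6/5) by lra; nra).
  fold s. lra.
Qed.

Lemma F_C8_neg m g z v V : (m = 1 \/ m = 2) -> 1 < g <= 2.4143 -> 0 < z <= 0.175 ->
  v ^ 2 + v * (1 - (g-2)*z) + 2*z = 0 -> -0.6 <= v -> v < V -> V < 0 ->
  Ff m g z V (1+v) < 0.
Proof.
  intros Hm Hg Hz Hq Hv1 HvV HV.
  set (X := -(1+v)^2*m*z/((1+V)*(1+v)) - a1 m g*((1+V)+(1+v)) + a2 m g z).
  assert (E : Ff m g z V (1+v) = (1+v)*((V-v)*X - m*(g-1)/2*(v ^ 2 + v * (1 - (g-2)*z) + 2*z))).
  { unfold X, Ff, a1, a2, a3. field. split; lra. }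
  rewrite E, Hq.
  assert (HX : X < 0).
  { unfold X, a1, a2.
    assert (0 <= (1+v)^2*m*z/((1+V)*(1+v))).
    { apply Rmult_le_pos; [| apply Rlt_le, Rinv_0_lt_compat; apply Rmult_lt_0_compat; lra].
      apply Rmult_le_pos; [apply Rmult_le_pos|]; [apply pow2_ge_0| destruct Hm; lra| lra]. }
    assert (m*z*g*(g-3) <= 0).
    { assert (0 <= m*z*g) by (apply Rmult_le_pos; [apply Rmult_le_pos|]; destruct Hm; lra).
      nra. }
    destruct Hm as [-> | ->]; nra. }
  assert (0 < (V - v) * - X) by (apply Rmult_lt_0_compat; lra).
  assert (0 < (1+v) * ((V - v) * - X)) by (apply Rmult_lt_0_compat; lra).
  replace ((1 + v) * ((V - v) * X - m * (g - 1) / 2 * 0)) with (- ((1+v) * ((V - v) * - X))) by ring.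
  lra.
Qed.

Lemma G_V0_pos m g z C : (m = 1 \/ m = 2) -> 1 < g <= 2.4143 -> 0 < z <= 0.175 ->
  0 < Gf m g z (-2*m*z/(m+1)) C.
Proof.
  intros Hm Hg Hz. unfold Gf, lam.
  destruct Hm as [-> | ->].
  - replace (-2*1*z/(1+1)) with (-z) by field.
    assert (0 < z * (1 - z) * (1 + 1*g*z - z)) by (apply Rmult_lt_0_compat; [apply Rmult_lt_0_compat|]; nra).
    replace (C ^ 2 * ((1 + 1) * - z + 2 * 1 * z) - - z * (1 + - z) * (1 + 1 * g * z + - z))
      with (z * (1 - z) * (1 + 1*g*z - z)) by ring. lra.
  - replace (-2*2*z/(2+1)) with (-(4/3)*z) by field.
    assert (0 < (4/3*z) * (1 - 4/3*z) * (1 + 2*g*z - 4/3*z)) by (apply Rmult_lt_0_compat; [apply Rmult_lt_0_compat|]; nra).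
    replace (C ^ 2 * ((2 + 1) * (- (4/3) * z) + 2 * 2 * z) - - (4/3) * z * (1 + - (4/3) * z) * (1 + 2 * g * z + - (4/3) * z))
      with ((4/3*z) * (1 - 4/3*z) * (1 + 2*g*z - 4/3*z)) by field. lra.
Qed.

Lemma curve_neg m g z v s : (m = 1 \/ m = 2) -> 1 < g <= 2.4143 -> 0 < z <= 0.175 ->
  v ^ 2 + v * (1 - (g-2)*z) + 2*z = 0 -> -0.6 <= v <= -0.38 -> v ^ 2 + 3 * v + 1 < 0 ->
  0 < s -> s ^ 2 < (1+v)^2 ->
  2 * s * Ff m g z (-(s^2)) s + Gf m g z (-(s^2)) s < 0.
Proof.
  intros Hm Hg Hz Hq Hv Hv2 Hs Hsv.
  assert (Hs1 : s^2 < 0.4) by nra.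
  assert (E : 2 * s * Ff m g z (-(s^2)) s + Gf m g z (-(s^2)) s = s^2 * Qf m g z (1 - s^2) / (1 - s^2)).
  { unfold Ff, Gf, Qf, lam, a1, a2, a3. field; repeat split; lra. }
  rewrite E.
  set (u0 := -v*(2+v)).
  assert (Hu0 : 0.6 <= u0 <= 1) by (unfold u0; nra).
  assert (Hu : u0 < 1 - s^2) by (unfold u0; nra).
  assert (HQu0 : Qf m g z u0 < 0).
  { assert (HD : 0 < 2-(g-2)*v) by nra.
    assert (HS : Qf m g z u0 * (2-(g-2)*v) < 0).
    { destruct Hm as [-> | ->].
      - unfold u0. rewrite Qu0_1, Hq, Rmult_0_r, Rplus_0_r.
        assert (HT := T1neg v g Hv ltac:(lra)). fold (T1 v g) in HT.
        assert (0 < v * T1 v g) by nra. nra.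
      - unfold u0. rewrite Qu0_2, Hq, Rmult_0_r, Rplus_0_r.
        assert (HT := T2pos v g Hv ltac:(lra)). fold (T2 v g) in HT.
        assert (0 < v^2 * T2 v g) by (apply Rmult_lt_0_compat; nra). nra. }
    nra. }
  assert (HQ : Qf m g z (1 - s^2) < 0).
  { assert (Hd := Qdiff m g z (1 - s^2) u0).
    assert (Hb := Br_neg m g z (1 - s^2) u0 Hm ltac:(lra) ltac:(lra) ltac:(nra) Hu0).
    assert (0 < (1 - s^2 - u0)) by lra.
    nra. }
  assert (0 < s^2) by nra.
  assert (0 < / (1 - s^2)) by (apply Rinv_0_lt_compat; lra).
  unfold Rdiv. assert (s^2 * Qf m g z (1 - s^2) < 0) by nra. nra.
Qed.

Theorem mainTheorem18 (m g z gs c : R) (C : R -> R) :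
  (m = 1 \/ m = 2) ->
  is_gamma_star gs ->
  gs < g <= gamma1 ->
  z1 g < z <= zM g ->
  c < 0 -> slope_quad m g z c = 0 ->
  (forall c', c' < 0 -> slope_quad m g z c' = 0 -> c' = c) ->
  real_analytic_at C (V8 g z) ->
  C (V8 g z) = C8 g z ->
  is_derive C (V8 g z) c ->
  (forall V, V8 g z <= V < 0 -> 0 < C V) ->
  (forall V, V8 g z < V < 0 ->
     Gf m g z V (C V) <> 0 /\
     is_derive C V (Ff m g z V (C V) / Gf m g z V (C V))) ->
  (forall V, V8 g z < V < 0 -> C V < sqrt (- V)) /\
  filterlim C (at_left 0) (locally 0).
Proof.
  intros Hm Hgs Hg Hz Hc _ _ _ HC8 HdC Hpos Hode.
  destruct (params m g z gs Hm Hgs Hg Hz) as [Hgb [Hzb [Hq [Hvb Hv2]]]].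
  unfold C8 in HC8.
  set (v := V8 g z) in *.
  assert (HcontC : forall V, v < V < 0 -> continuity_pt C V).
  { intros V HV. exact (der_cont _ _ _ (proj2 (Hode V HV))). }
  assert (HdlC : forall V, v < V < 0 -> derivable_pt_lim C V (Ff m g z V (C V) / Gf m g z V (C V))).
  { intros V HV. apply is_derive_Reals. exact (proj2 (Hode V HV)). }
  assert (HG : forall V, v < V < 0 -> 0 < Gf m g z V (C V)).
  { intros V1 HV1.
    set (h := fun x => Gf m g z x (C x)).
    assert (Hh : forall x, v < x < 0 -> continuity_pt h x).
    { intros x Hx. destruct (Hode x Hx) as [_ Hd].
      assert (Hex : ex_derive h x).
      { unfold h, Gf. auto_derive. exists (Ff m g z x (C x) / Gf m g z x (C x)); exact Hd. }
      destruct Hex as [l Hl]. exact (der_cont _ _ _ Hl). }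
    set (V0 := -2*m*z/(m+1)).
    assert (HV0 : v < V0 < 0) by (unfold V0; destruct Hm as [-> | ->]; split; lra).
    assert (HhV0 : 0 < h V0) by (apply G_V0_pos; auto; lra).
    destruct (Rlt_le_dec 0 (h V1)) as [Hp|Hn]; [exact Hp|].
    exfalso.
    assert (Hn' : h V1 < 0) by (destruct (Hode V1 HV1) as [Hne _]; unfold h in *; lra).
    destruct (Rtotal_order V1 V0) as [Hlt|[Heq|Hgt]].
    - assert (Hc1 : forall a, V1 <= a <= V0 -> continuity_pt h a) by (intros a Ha; apply Hh; lra).
      destruct (IVT_interv h V1 V0 Hc1 Hlt Hn' HhV0) as [x [Hx Hx0]].
      apply (proj1 (Hode x ltac:(lra))). exact Hx0.
    - subst. lra.
    - assert (Hc1 : forall a, V0 <= a <= V1 -> continuity_pt (fun x => - h x) a)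
        by (intros a Ha; apply continuity_pt_opp; apply Hh; lra).
      destruct (IVT_interv (fun x => - h x) V0 V1 Hc1 Hgt ltac:(lra) ltac:(lra)) as [x [Hx Hx0]].
      apply (proj1 (Hode x ltac:(lra))). unfold h in Hx0. lra. }
  set (W := -(1+v)^2).
  assert (HvW : v < W) by (unfold W; nra).
  assert (HW0 : W < 0) by (unfold W; nra).
  assert (HA : forall V, v < V <= W -> C V < 1 + v).
  { intros V HV.
    assert (Hd0 : derivable_pt_lim C v c) by (apply is_derive_Reals; exact HdC).
    destruct (start_below C v c Hd0 Hc) as [d [Hd Hd1]].
    set (a := v + Rmin d (V - v) / 2).
    assert (Hm1 : Rmin d (V - v) <= d) by apply Rmin_l.
    assert (Hm2 : Rmin d (V - v) <= V - v) by apply Rmin_r.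
    assert (Hm3 : 0 < Rmin d (V - v)) by (apply Rmin_glb_lt; lra).
    assert (Ha : v < a < V) by (unfold a; lra).
    assert (HCa : C a < 1 + v) by (rewrite <- HC8; apply Hd1; unfold a; lra).
    destruct (Rlt_le_dec (C V) (1+v)) as [|HV']; auto. exfalso.
    destruct (first_touch (fun x => C x - (1+v)) a V) as [T [HT [HfT Hb]]].
    - lra.
    - intros x Hx. apply continuity_pt_minus. apply HcontC. lra. apply continuity_pt_const. intros p q; auto.
    - lra.
    - lra.
    - assert (HTr : v < T < 0) by lra.
      assert (Hl := touch_deriv (fun x => C x - (1+v)) T a _ (proj1 HT)
        ltac:(replace (Ff m g z T (C T) / Gf m g z T (C T)) with (Ff m g z T (C T) / Gf m g z T (C T) - 0) by ring;
              apply (derivable_pt_lim_minus C (fun _ => 1+v)); [apply HdlC; auto| apply derivable_pt_lim_const]) HfT Hb).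
      assert (HCT : C T = 1 + v) by lra.
      assert (HGT := HG T HTr).
      assert (HF := F_C8_neg m g z v T Hm ltac:(lra) Hzb Hq ltac:(lra) ltac:(lra) ltac:(lra)).
      rewrite HCT in Hl, HGT.
      assert (0 <= Ff m g z T (1 + v)).
      { replace (Ff m g z T (1 + v)) with ((Ff m g z T (1 + v) / Gf m g z T (1 + v)) * Gf m g z T (1 + v)) by (field; lra).
        apply Rmult_le_pos; lra. }
      lra. }
  assert (Hsqv : sqrt (-W) = 1 + v).
  { unfold W. replace (- - (1+v)^2) with ((1+v)^2) by ring. apply sqrt_pow2. lra. }
  assert (HB : forall V, W < V < 0 -> C V < sqrt (- V)).
  { intros V HV.
    destruct (Rlt_le_dec (C V) (sqrt (-V))) as [|HV']; auto. exfalso.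
    assert (HCW : C W < 1 + v) by (apply HA; lra).
    assert (Hds : forall x, v < x < 0 -> derivable_pt_lim (fun y => C y - sqrt (- y)) x
                   (Ff m g z x (C x) / Gf m g z x (C x) - (-1)/(2*sqrt(-x)))).
    { intros x Hx. apply (derivable_pt_lim_minus C (fun y => sqrt (-y))). apply HdlC; auto.
      apply is_derive_Reals. auto_derive. lra. assert (0 < sqrt (-x)) by (apply sqrt_lt_R0; lra). field. lra. }
    destruct (first_touch (fun x => C x - sqrt (- x)) W V) as [T [HT [HfT Hb]]].
    - lra.
    - intros x Hx. exact (der_cont _ _ _ (proj2 (is_derive_Reals _ _ _) (Hds x ltac:(lra)))).
    - rewrite Hsqv. lra.
    - lra.
    - assert (HTr : v < T < 0) by lra.
      assert (Hl := touch_deriv _ T W _ (proj1 HT) (Hds T HTr) HfT Hb).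
      set (s := sqrt (-T)) in *.
      assert (Hs : 0 < s) by (apply sqrt_lt_R0; lra).
      assert (HCT : C T = s) by lra.
      assert (HGT := HG T HTr).
      rewrite HCT in Hl, HGT.
      assert (Hs2 : s^2 = -T) by (unfold s; apply sqrt_sq; lra).
      assert (HTs : T = -(s^2)) by lra.
      assert (Hsv : s^2 < (1+v)^2) by (unfold W in HT; lra).
      assert (Hneg := curve_neg m g z v s Hm ltac:(lra) Hzb Hq Hvb Hv2 Hs Hsv).
      rewrite <- HTs in Hneg.
      set (F0 := Ff m g z T s) in *. set (G0 := Gf m g z T s) in *.
      assert (E : 2*s*F0 + G0 = (2*s*G0) * (F0/G0 - (-1)/(2*s))) by (field; lra).
      assert (0 <= (2*s*G0) * (F0/G0 - (-1)/(2*s))).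
      { apply Rmult_le_pos; [|lra]. nra. }
      lra. }
  split.
  - intros V HV. destruct (Rle_lt_dec V W) as [HVW|HVW].
    + assert (C V < 1 + v) by (apply HA; lra).
      assert (sqrt (-W) <= sqrt (-V)) by (apply sqrt_le_1_alt; lra). lra.
    + apply HB; lra.
  - apply filterlim_locally. intro eps. unfold at_left, within, locally.
    assert (Hdel : 0 < Rmin (eps*eps) (-v)).
    { apply Rmin_glb_lt; [destruct eps; simpl; nra| lra]. }
    exists (mkposreal _ Hdel). intros y Hy Hy0. unfold ball in Hy |- *. simpl in *.
    unfold AbsRing_ball, abs, minus, plus, opp in *. simpl in *.
    rewrite Ropp_0, Rplus_0_r in *.
    assert (Hm1 : Rmin (eps*eps) (-v) <= eps*eps) by apply Rmin_l.
    assert (Hm2 : Rmin (eps*eps) (-v) <= -v) by apply Rmin_r.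
    rewrite Rabs_left in Hy by lra.
    assert (HyV : v < y < 0) by lra.
    assert (H1 := Hpos y ltac:(lra)).
    assert (H2 : C y < sqrt (-y)).
    { destruct (Rle_lt_dec y W) as [HVW|HVW].
      + assert (C y < 1 + v) by (apply HA; lra).
        assert (sqrt (-W) <= sqrt (-y)) by (apply sqrt_le_1_alt; lra). lra.
      + apply HB; lra. }
    assert (H3 : sqrt (-y) < eps).
    { destruct eps as [e He]; simpl in *.
      rewrite <- (sqrt_pow2 e) by lra. apply sqrt_lt_1_alt. lra. }
    rewrite Rabs_pos_eq by lra. lra.
Qed.
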